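(* Let $f:\mathcal R\to\mathrm{Nil}_3$ be a conformal minimal immersion which is equivariant, i.e. there are one-parameter groups $\gamma_t\in\mathrm{Aut}(\mathcal R)$ and $\rho_t\in\mathrm{Iso}_\circ(\mathrm{Nil}_3)$, $\rho_t$ not identically the identity, with $f\circ\gamma_t=\rho_t\circ f$ for all $t$. Then $f$ is either a helicoidal surface (its image is invariant under a one-parameter group of helicoidal motions $\rho^{(c,\alpha)}_t$, possibly with pitch $c=0$) or a translation invariant surface (its image is invariant under a one-parameter group of translations $t\mapsto(ta_1,ta_2,tc)\in\mathrm{Nil}_3$ acting by left multiplication).
   Context: $\mathrm{Nil}_3$ denotes $\mathbb R^3$ with the group law $(a_1,a_2,a_3)\cdot(x_1,x_2,x_3)=(a_1+x_1,a_2+x_2,a_3+x_3+\tfrac12(a_1x_2-a_2x_1))$ and the left-invariant metric $dx_1^2+dx_2^2+(dx_3+\tfrac12(x_2dx_1-x_1dx_2))^2$. $\mathrm{Iso}_\circ(\mathrm{Nil}_3)\cong\mathrm{Nil}_3\rtimes\mathrm U_1$, where $(a,e^{i\theta})$ acts by $(a,e^{i\theta}).(x_1,x_2,x_3)=a\cdot(\cos\theta\, x_1-\sin\theta\, x_2,\ \sin\theta\, x_1+\cos\theta\, x_2,\ x_3)$; $a\in\mathrm{Nil}_3$ is identified with $(a,1)$ and $e^{i\theta}$ with $((0,0,0),e^{i\theta})$. A helicoidal motion with pitch $c$ along the axis through $\alpha=(a_1,a_2,0)$ is the one-parameter group $\rho^{(c,\alpha)}_t=\alpha\,(0,0,tc)\,e^{it}\,\alpha^{-1}$.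 *)

(* Defs.v *)
From Stdlib Require Import Reals Lra List.
Open Scope R_scope.

Definition C := (R * R)%type.
Definition cadd (z w : C) : C := (fst z + fst w, snd z + snd w).
Definition csub (z w : C) : C := (fst z - fst w, snd z - snd w).
Definition cmul (z w : C) : C :=
  (fst z * fst w - snd z * snd w, fst z * snd w + snd z * fst w).
Definition cinv (z : C) : C :=
  let n := fst z * fst z + snd z * snd z in (fst z / n, - snd z / n).
Definition cdiv (z w : C) : C := cmul z (cinv w).
Definition cnorm (z : C) : R := sqrt (fst z * fst z + snd z * snd z).

Definition open2 (D : C -> Prop) : Prop :=
  forall z, D z -> exists e, 0 < e /\ forall w, cnorm (csub w z) < e -> D w.

Definition holo_on (D : C -> Prop) (g : C -> C) : Prop :=
  open2 D /\
  forall z, D z -> exists w : C, forall eps, 0 < eps -> exists del, 0 < del /\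
    forall h, h <> (0, 0) -> cnorm h < del -> D (cadd z h) ->
      cnorm (csub (cdiv (csub (g (cadd z h)) (g z)) h) w) < eps.

Definition chart_overlap {X I : Type} (dom : I -> X -> Prop) (ch : I -> X -> C)
  (i j : I) (z : C) : Prop := exists x, dom i x /\ dom j x /\ ch i x = z.

Definition open_in {X I : Type} (dom : I -> X -> Prop) (ch : I -> X -> C)
  (S : X -> Prop) : Prop :=
  forall i, open2 (fun z => exists x, dom i x /\ S x /\ ch i x = z).

Record RiemannSurface := {
  rs_car : Type;
  rs_idx : Type;
  rs_dom : rs_idx -> rs_car -> Prop;
  rs_chart : rs_idx -> rs_car -> C;
  rs_inhabited : inhabited rs_car;
  rs_cover : forall x, exists i, rs_dom i x;
  rs_inj : forall i x y, rs_dom i x -> rs_dom i y ->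
             rs_chart i x = rs_chart i y -> x = y;
  (* holomorphic transition maps (for i = j this says the chart images are open) *)
  rs_trans : forall i j, exists tau : C -> C,
      holo_on (chart_overlap rs_dom rs_chart i j) tau /\
      forall x, rs_dom i x -> rs_dom j x -> tau (rs_chart i x) = rs_chart j x;
  rs_hausdorff : forall x y, x <> y -> exists U V,
      open_in rs_dom rs_chart U /\ open_in rs_dom rs_chart V /\
      U x /\ V y /\ forall z, ~ (U z /\ V z);
  rs_connected : forall U V,
      open_in rs_dom rs_chart U -> open_in rs_dom rs_chart V ->
      (forall x, U x \/ V x) -> (forall x, ~ (U x /\ V x)) ->
      (forall x, U x) \/ (forall x, V x)
}.

Definition rs_open (X : RiemannSurface) (S : rs_car X -> Prop) : Prop :=
  open_in (rs_dom X) (rs_chart X) S.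

Definition rs_continuous (X : RiemannSurface) (h : rs_car X -> rs_car X) : Prop :=
  forall S, rs_open X S -> rs_open X (fun x => S (h x)).

Definition rs_holomorphic (X : RiemannSurface) (h : rs_car X -> rs_car X) : Prop :=
  rs_continuous X h /\
  forall i j, exists tau : C -> C,
    holo_on (fun z => exists x, rs_dom X i x /\ rs_dom X j (h x) /\ rs_chart X i x = z) tau /\
    forall x, rs_dom X i x -> rs_dom X j (h x) -> tau (rs_chart X i x) = rs_chart X j (h x).

Definition rs_aut (X : RiemannSurface) (h : rs_car X -> rs_car X) : Prop :=
  rs_holomorphic X h /\ exists k, rs_holomorphic X k /\
    (forall x, k (h x) = x) /\ (forall x, h (k x) = x).

Definition aut_one_param (X : RiemannSurface) (g : R -> rs_car X -> rs_car X) : Prop :=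
  (forall t, rs_aut X (g t)) /\
  (forall s t x, g (s + t) x = g s (g t x)) /\
  (forall x t0 S, rs_open X S -> S (g t0 x) ->
     exists del, 0 < del /\ forall t, Rabs (t - t0) < del -> S (g t x)).

Definition R3 := (R * R * R)%type.
Definition p1 (p : R3) : R := fst (fst p).
Definition p2 (p : R3) : R := snd (fst p).
Definition p3 (p : R3) : R := snd p.

Definition nmul (a x : R3) : R3 :=
  (p1 a + p1 x, p2 a + p2 x, p3 a + p3 x + / 2 * (p1 a * p2 x - p2 a * p1 x)).
Definition ninv (a : R3) : R3 := (- p1 a, - p2 a, - p3 a).

Definition nrot (th : R) (x : R3) : R3 :=
  (cos th * p1 x - sin th * p2 x, sin th * p1 x + cos th * p2 x, p3 x).

(* action of (a, e^{i theta}) in Iso_o(Nil_3) = Nil_3 ⋊ U_1 *)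
Definition iso_act (a : R3) (th : R) (x : R3) : R3 := nmul a (nrot th x).

(* helicoidal motion rho^{(c,alpha)}_t, alpha = (a1,a2,0):
   alpha (0,0,tc) e^{it} alpha^{-1}, acting by composition *)
Definition helicoidal (c a1 a2 t : R) (x : R3) : R3 :=
  let alpha := (a1, a2, 0) in
  iso_act alpha 0 (iso_act (0, 0, t * c) 0 (iso_act (0, 0, 0) t (iso_act (ninv alpha) 0 x))).

(* metric dx1^2+dx2^2+(dx3+1/2(x2 dx1 - x1 dx2))^2 at p, as bilinear form *)
Definition nil_inner (p u v : R3) : R :=
  p1 u * p1 v + p2 u * p2 v +
  (p3 u + / 2 * (p2 p * p1 u - p1 p * p2 u)) *
  (p3 v + / 2 * (p2 p * p1 v - p1 p * p2 v)).

(* d w = iterated partial derivative along the word w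
   (false = d/dx, true = d/dy; the head of w is the last derivative taken);
   all exist and are continuous on D: h is C^infinity on D *)
Definition smooth_tower (D : C -> Prop) (h : C -> R) (d : list bool -> C -> R) : Prop :=
  (forall p, D p -> d nil p = h p) /\
  forall w p, D p ->
    derivable_pt_lim (fun t => d w (t, snd p)) (fst p) (d (false :: w) p) /\
    derivable_pt_lim (fun t => d w (fst p, t)) (snd p) (d (true :: w) p) /\
    (forall eps, 0 < eps -> exists del, 0 < del /\
       forall q, D q -> cnorm (csub q p) < del -> Rabs (d w q - d w p) < eps).

(* Pointwise conditions, in a conformal coordinate z = x + i y, for a local
   expression F with value P, F_x, F_y and Laplacian L = F_xx + F_yy:
   conformality, immersion, and vanishing of the tension field
   tau(F) = trace nabla dF (minimality, for a conformal immersion).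
   The tension field is expressed in the left-invariant orthonormal frame
   E1 = d1 - x2/2 d3, E2 = d2 + x1/2 d3, E3 = d3 ([E1,E2] = E3), whose
   Levi-Civita connection is nabla_{E1}E2 = E3/2 = -nabla_{E2}E1,
   nabla_{E1}E3 = nabla_{E3}E1 = -E2/2, nabla_{E2}E3 = nabla_{E3}E2 = E1/2,
   nabla_{Ei}Ei = 0.  With F_x = sum a_i E_i, F_y = sum b_i E_i:
     tau = sum_i (d_x a_i + d_y b_i) E_i + sum_{i,j}(a_i a_j + b_i b_j) nabla_{E_i}E_j. *)
Definition frame3 (P V : R3) : R := p3 V + / 2 * (p2 P * p1 V - p1 P * p2 V).

Definition cmi_point (P Fx Fy L : R3) : Prop :=
  nil_inner P Fx Fx = nil_inner P Fy Fy /\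
  nil_inner P Fx Fy = 0 /\
  Fx <> (0, 0, 0) /\
  p1 L + p2 Fx * frame3 P Fx + p2 Fy * frame3 P Fy = 0 /\
  p2 L - p1 Fx * frame3 P Fx - p1 Fy * frame3 P Fy = 0 /\
  p3 L + / 2 * (p2 P * p1 L - p1 P * p2 L) = 0.

Definition conformal_minimal_immersion (X : RiemannSurface) (f : rs_car X -> R3) : Prop :=
  forall i, exists F1 F2 F3 : C -> R,
    (forall x, rs_dom X i x ->
       f x = (F1 (rs_chart X i x), F2 (rs_chart X i x), F3 (rs_chart X i x))) /\
    let D := chart_overlap (rs_dom X) (rs_chart X) i i in
    exists d1 d2 d3,
      smooth_tower D F1 d1 /\ smooth_tower D F2 d2 /\ smooth_tower D F3 d3 /\
      forall p, D p ->
        cmi_point (F1 p, F2 p, F3 p)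
          (d1 (false :: nil) p, d2 (false :: nil) p, d3 (false :: nil) p)
          (d1 (true :: nil) p, d2 (true :: nil) p, d3 (true :: nil) p)
          (d1 (false :: false :: nil) p + d1 (true :: true :: nil) p,
           d2 (false :: false :: nil) p + d2 (true :: true :: nil) p,
           d3 (false :: false :: nil) p + d3 (true :: true :: nil) p).

Definition iso_one_param (rho : R -> R3 -> R3) : Prop :=
  (forall t, exists a th, forall x, rho t x = iso_act a th x) /\
  (forall s t x, rho (s + t) x = rho s (rho t x)) /\
  (forall x, continuity (fun t => p1 (rho t x)) /\
             continuity (fun t => p2 (rho t x)) /\
             continuity (fun t => p3 (rho t x))).

(* Main.v *)
Require Import Defs.
From Stdlib Require Import Reals Lra Lia ZArith Classical.
Open Scope R_scope.

Lemma cont_eps (f : R -> R) (x : R) : continuity_pt f x ->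
  forall eps, 0 < eps -> exists d, 0 < d /\ forall y, Rabs (y - x) < d -> Rabs (f y - f x) < eps.
Proof.
  intros H eps He. destruct (H eps He) as [d [Hd Hy]]. exists d; split; auto.
  intros y Hyx. destruct (Req_dec y x) as [->|Hne].
  - rewrite Rminus_diag, Rabs_R0; auto.
  - apply (Hy y). split. split; [exact I| auto]. exact Hyx.
Qed.

Lemma pow2_big (n : nat) : INR n < 2 ^ n.
Proof.
  induction n. simpl; lra. rewrite S_INR. simpl.
  assert (1 <= 2 ^ n) by (apply pow_R1_Rle; lra). lra.
Qed.

Lemma int_mult (P : R -> Prop) (e : R) :
  (forall s t, P s -> P t -> P (s + t)) -> (forall t, P t -> P (- t)) -> P e ->
  forall z : Z, P (IZR z * e).
Proof.
  intros Hs Hn He.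
  assert (H0 : P 0). { replace 0 with (e + - e) by ring. auto. }
  assert (Hnat : forall n : nat, P (INR n * e)).
  { induction n. simpl. replace (0 * e) with 0 by ring. auto.
    rewrite S_INR. replace ((INR n + 1) * e) with (INR n * e + e) by ring. auto. }
  intros z. destruct (Z_le_gt_dec 0 z).
  - rewrite <- (Z2Nat.id z) by lia. rewrite <- INR_IZR_INZ. auto.
  - replace z with (- (- z))%Z by lia. rewrite opp_IZR.
    replace (- IZR (- z) * e) with (- (IZR (-z) * e)) by ring. apply Hn.
    rewrite <- (Z2Nat.id (-z)) by lia. rewrite <- INR_IZR_INZ. auto.
Qed.

Lemma dyad_approx (d : R) (P : R -> Prop) : 0 < d ->
  (forall s t, P s -> P t -> P (s + t)) -> (forall t, P t -> P (- t)) ->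
  (forall j : nat, P (d / 2 ^ j)) ->
  forall x eta, 0 < eta -> exists y r, P y /\ x = y + r /\ 0 <= r < eta.
Proof.
  intros Hd Hs Hn Hj x eta Heta.
  destruct (archimed (d / eta)) as [Hu _].
  assert (Hup : 0 <= IZR (up (d/eta))).
  { assert (0 < d/eta) by (apply Rdiv_lt_0_compat; auto). lra. }
  set (n := Z.to_nat (up (d / eta))).
  assert (Hn' : d / eta < INR n).
  { unfold n. rewrite INR_IZR_INZ, Z2Nat.id. lra. apply le_IZR. lra. }
  pose proof (pow2_big n) as Hp.
  assert (Hp0 : 0 < 2 ^ n) by (apply pow_lt; lra).
  set (e := d / 2 ^ n).
  assert (He : 0 < e) by (unfold e; apply Rdiv_lt_0_compat; auto).
  assert (Hee : e < eta).
  { unfold e. apply Rmult_lt_reg_r with (2 ^ n); auto. unfold Rdiv.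
    rewrite Rmult_assoc, Rinv_l by lra. rewrite Rmult_1_r.
    apply Rmult_lt_reg_r with (/ eta). apply Rinv_0_lt_compat; auto.
    replace (eta * 2 ^ n * / eta) with (2 ^ n) by (field; lra). unfold Rdiv in Hn'. lra. }
  destruct (archimed (x / e)) as [H1 H2].
  set (m := (up (x / e) - 1)%Z).
  exists (IZR m * e), (x - IZR m * e).
  split. apply int_mult; auto. apply Hj.
  split. ring.
  unfold m. rewrite minus_IZR.
  assert (Hx : x = (x / e) * e) by (field; lra).
  split.
  - assert (IZR (up (x / e)) - 1 <= x / e) by lra.
    assert ((IZR (up (x / e)) - 1) * e <= x / e * e) by (apply Rmult_le_compat_r; lra). lra.
  - assert (x / e * e < (IZR (up (x / e)) - 1 + 1) * e) by (apply Rmult_lt_compat_r; lra). lra.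
Qed.

Lemma cauchy (g : R -> R) :
  (forall s t, g (s + t) = g s + g t) -> continuity_pt g 0 -> forall t, g t = t * g 1.
Proof.
  intros Ha Hc.
  assert (H0 : g 0 = 0). { pose proof (Ha 0 0) as H. rewrite Rplus_0_r in H. lra. }
  set (Q := fun t => g t = t * g 1).
  assert (Hs : forall s t, Q s -> Q t -> Q (s + t)).
  { unfold Q; intros s t H1 H2. rewrite Ha, H1, H2. ring. }
  assert (Hn : forall t, Q t -> Q (- t)).
  { unfold Q; intros t H1. pose proof (Ha t (-t)) as H. rewrite Rplus_opp_r, H0 in H. lra. }
  assert (Hj : forall j : nat, Q (1 / 2 ^ j)).
  { induction j. unfold Q. simpl. replace (1/1) with 1 by field. ring.
    unfold Q in *. assert (Hp : 0 < 2 ^ j) by (apply pow_lt; lra).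
    pose proof (Ha (1 / 2 ^ S j) (1 / 2 ^ S j)) as H. simpl in H.
    replace (1 / (2 * 2 ^ j) + 1 / (2 * 2 ^ j)) with (1 / 2 ^ j) in H by (field; lra).
    simpl. rewrite IHj in H.
    replace (1 / (2 * 2 ^ j) * g 1) with (1 / 2 ^ j * g 1 / 2) by (field; lra). lra. }
  intros x.
  apply Rminus_diag_uniq.
  destruct (Req_dec (g x - x * g 1) 0) as [Heq0|Hne]; [auto|].
  assert (Hlt := Rabs_pos_lt _ Hne).
  exfalso. set (eps := Rabs (g x - x * g 1)) in *.
  destruct (cont_eps g 0 Hc (eps/2)) as [d0 [Hd0 Hd]]. lra.
  set (eta := Rmin d0 (eps / (2 * (Rabs (g 1) + 1)))).
  assert (Hg1 : 0 <= Rabs (g 1)) by apply Rabs_pos.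
  assert (Heta : 0 < eta).
  { unfold eta. apply Rmin_glb_lt; auto. apply Rdiv_lt_0_compat; lra. }
  destruct (dyad_approx 1 Q ltac:(lra) Hs Hn Hj x eta Heta) as [y [r [Hy [Hxy Hr]]]].
  assert (Hgr : Rabs (g r) < eps / 2).
  { specialize (Hd r). rewrite !Rminus_0_r, H0, Rminus_0_r in Hd. apply Hd.
    rewrite Rabs_right by lra. apply Rlt_le_trans with eta. lra. apply Rmin_l. }
  assert (Hrg : r * Rabs (g 1) < eps / 2).
  { assert (r < eps / (2 * (Rabs (g 1) + 1))).
    { apply Rlt_le_trans with eta. lra. apply Rmin_r. }
    assert (r * (Rabs (g 1) + 1) < eps / 2).
    { apply Rmult_lt_reg_r with (/ (Rabs (g 1) + 1)). apply Rinv_0_lt_compat; lra.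
      replace (r * (Rabs (g 1) + 1) * / (Rabs (g 1) + 1)) with r by (field; lra).
      replace (eps / 2 * / (Rabs (g 1) + 1)) with (eps / (2 * (Rabs (g 1) + 1))) by (field; lra).
      auto. }
    nra. }
  assert (Heq : g x - x * g 1 = g r - r * g 1).
  { rewrite Hxy, Ha. unfold Q in Hy. rewrite Hy. ring. }
  assert (Rabs (g r - r * g 1) <= Rabs (g r) + r * Rabs (g 1)).
  { eapply Rle_trans. apply Rabs_triang. rewrite Rabs_Ropp, Rabs_mult, (Rabs_right r) by lra. lra. }
  unfold eps in *. rewrite Heq in *. lra.
Qed.


Definition act (a : R3) (c s : R) (x : R3) : R3 :=
  (p1 a + c * p1 x - s * p2 x, p2 a + s * p1 x + c * p2 x,
   p3 a + p3 x + / 2 * (p1 a * (s * p1 x + c * p2 x) - p2 a * (c * p1 x - s * p2 x))).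

Definition o3 : R3 := (0, 0, 0).
Definition e3 : R3 := (1, 0, 0).

Lemma R3_eq (x y : R3) : p1 x = p1 y -> p2 x = p2 y -> p3 x = p3 y -> x = y.
Proof. destruct x as [[a b] c], y as [[a' b'] c']; unfold p1, p2, p3; simpl; intros; subst; auto. Qed.

Section Rho.
Variable rho : R -> R3 -> R3.
Hypothesis Hiso : iso_one_param rho.

Definition A t := rho t o3.
Definition Co t := p1 (rho t e3) - p1 (A t).
Definition Si t := p2 (rho t e3) - p2 (A t).

Lemma rep t x : rho t x = act (A t) (Co t) (Si t) x /\ Co t ^ 2 + Si t ^ 2 = 1.
Proof.
  destruct Hiso as [H1 _]. destruct (H1 t) as [a [th Ht]].
  unfold Co, Si, A. rewrite !Ht. split.
  - apply R3_eq; unfold act, iso_act, nmul, nrot, o3, e3, p1, p2, p3; simpl; ring.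
  - unfold iso_act, nmul, nrot, o3, e3, p1, p2, p3; simpl.
    pose proof (sin2_cos2 th). unfold Rsqr in *. nra.
Qed.
End Rho.

Section Rho2.
Variable rho : R -> R3 -> R3.
Hypothesis Hiso : iso_one_param rho.

Lemma circ t : Co rho t ^ 2 + Si rho t ^ 2 = 1.
Proof. exact (proj2 (rep rho Hiso t o3)). Qed.

Lemma law_A s t : A rho (s + t) = act (A rho s) (Co rho s) (Si rho s) (A rho t).
Proof.
  destruct Hiso as [_ [H2 _]]. unfold A at 1. rewrite H2.
  destruct (rep rho Hiso s (rho t o3)) as [-> _]. reflexivity.
Qed.

Lemma law_CS s t : Co rho (s + t) = Co rho s * Co rho t - Si rho s * Si rho t /\
                   Si rho (s + t) = Si rho s * Co rho t + Co rho s * Si rho t.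
Proof.
  destruct Hiso as [_ [H2 _]].
  assert (E : rho (s + t) e3 = act (A rho s) (Co rho s) (Si rho s) (act (A rho t) (Co rho t) (Si rho t) e3)).
  { rewrite H2. destruct (rep rho Hiso s (rho t e3)) as [-> _].
    destruct (rep rho Hiso t e3) as [-> _]. reflexivity. }
  split; [unfold Co at 1|unfold Si at 1]; rewrite E, law_A; unfold act, e3; cbn [fst snd p1 p2 p3]; ring.
Qed.

Lemma law_0 : Co rho 0 = 1 /\ Si rho 0 = 0 /\ A rho 0 = o3.
Proof.
  destruct (law_CS 0 0) as [H1 H2]. rewrite Rplus_0_r in H1, H2.
  pose proof (circ 0) as Hc.
  assert (HS : Si rho 0 = 0).
  { destruct (Req_dec (Si rho 0) 0) as [|Hn]; auto.
    assert (Co rho 0 = 1/2).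
    { apply Rmult_eq_reg_l with (Si rho 0); auto. lra. }
    nra. }
  assert (HC : Co rho 0 = 1) by nra.
  split; auto. split; auto.
  pose proof (law_A 0 0) as HA. rewrite Rplus_0_r, HC, HS in HA.
  destruct (A rho 0) as [[a b] c]. unfold act, p1, p2, p3 in HA; simpl in HA.
  injection HA. intros. unfold o3. f_equal; [f_equal|]; nra.
Qed.

Lemma law_neg t : Co rho (- t) = Co rho t /\ Si rho (- t) = - Si rho t.
Proof.
  destruct (law_CS t (- t)) as [H1 H2]. rewrite Rplus_opp_r in H1, H2.
  destruct law_0 as [H0c [H0s _]]. pose proof (circ t) as Hc.
  split.
  - replace (Co rho (- t)) with ((Co rho t ^ 2 + Si rho t ^ 2) * Co rho (-t)) by (rewrite Hc; ring).
    replace ((Co rho t ^ 2 + Si rho t ^ 2) * Co rho (-t)) with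
      (Co rho t * (Co rho t * Co rho (- t) - Si rho t * Si rho (- t)) + Si rho t * (Si rho t * Co rho (- t) + Co rho t * Si rho (- t))) by ring.
    rewrite <- H1, <- H2, H0c, H0s. ring.
  - replace (Si rho (- t)) with ((Co rho t ^ 2 + Si rho t ^ 2) * Si rho (-t)) by (rewrite Hc; ring).
    replace ((Co rho t ^ 2 + Si rho t ^ 2) * Si rho (-t)) with
      (- Si rho t * (Co rho t * Co rho (- t) - Si rho t * Si rho (- t)) + Co rho t * (Si rho t * Co rho (- t) + Co rho t * Si rho (- t))) by ring.
    rewrite <- H1, <- H2, H0c, H0s. ring.
Qed.

Lemma cont_all : forall t, continuity_pt (Co rho) t /\ continuity_pt (Si rho) t /\
  continuity_pt (fun t => p1 (A rho t)) t /\ continuity_pt (fun t => p2 (A rho t)) t /\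
  continuity_pt (fun t => p3 (A rho t)) t.
Proof.
  destruct Hiso as [_ [_ H3]]. intros t.
  destruct (H3 o3) as [a1 [a2 a3]]. destruct (H3 e3) as [b1 [b2 _]].
  unfold Co, Si, A. repeat split; auto; apply continuity_pt_minus; auto.
Qed.
End Rho2.


Lemma small_zero (u : R) : (forall eps, 0 < eps -> Rabs u < eps) -> u = 0.
Proof.
  intros H. destruct (Req_dec u 0) as [|Hn]; auto.
  pose proof (Rabs_pos_lt u Hn). specialize (H (Rabs u) H0). lra.
Qed.

Lemma abs_cos_le x : Rabs (cos x) <= 1.
Proof. pose proof (COS_bound x). apply Rabs_le. lra. Qed.
Lemma abs_sin_le x : Rabs (sin x) <= 1.
Proof. pose proof (SIN_bound x). apply Rabs_le. lra. Qed.

Lemma abs_mul_le (a b : R) : Rabs a <= 1 -> Rabs (a * b) <= Rabs b.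
Proof. intros H. rewrite Rabs_mult. pose proof (Rabs_pos b). nra. Qed.

Section Lift.
Variables Cf Sf : R -> R.
Hypothesis Hcirc : forall t, Cf t ^ 2 + Sf t ^ 2 = 1.
Hypothesis HaddC : forall s t, Cf (s + t) = Cf s * Cf t - Sf s * Sf t.
Hypothesis HaddS : forall s t, Sf (s + t) = Sf s * Cf t + Cf s * Sf t.
Hypothesis HnegC : forall t, Cf (- t) = Cf t.
Hypothesis HnegS : forall t, Sf (- t) = - Sf t.
Hypothesis H0C : Cf 0 = 1.
Hypothesis H0S : Sf 0 = 0.
Hypothesis HcC : continuity_pt Cf 0.
Hypothesis HcS : continuity_pt Sf 0.

Lemma lift : exists k, forall t, Cf t = cos (k * t) /\ Sf t = sin (k * t).
Proof.
  destruct (cont_eps Cf 0 HcC (1/2)) as [d0 [Hd0 Hd]]; [lra|].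
  set (d := d0 / 2).
  assert (Hdp : 0 < d) by (unfold d; lra).
  assert (Hpos : forall t, Rabs t <= d -> Cf t > 1/2).
  { intros t Ht. specialize (Hd t). rewrite Rminus_0_r, H0C in Hd.
    assert (Rabs (Cf t - 1) < 1/2) by (apply Hd; unfold d in Ht; lra).
    apply Rabs_def2 in H. lra. }
  set (x := Sf d / Cf d).
  set (phi := atan x).
  assert (Hcd : Cf d > 1/2) by (apply Hpos; rewrite Rabs_right; lra).
  assert (Hsq : sqrt (1 + x²) = / Cf d).
  { apply sqrt_lem_1. unfold Rsqr; nra. left; apply Rinv_0_lt_compat; lra.
    unfold x, Rsqr. pose proof (Hcirc d). field_simplify; try lra. rewrite H. reflexivity.
  }
  assert (Hphic : cos phi = Cf d).
  { unfold phi. rewrite cos_atan, Hsq. field. lra. }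
  assert (Hphis : sin phi = Sf d).
  { unfold phi. rewrite sin_atan, Hsq. unfold x. field. lra. }
  set (k := phi / d).
  exists k.
  set (Q := fun t => Cf t = cos (k * t) /\ Sf t = sin (k * t)).
  assert (Hs : forall s t, Q s -> Q t -> Q (s + t)).
  { unfold Q; intros s t [H1 H2] [H3 H4]. rewrite HaddC, HaddS, Rmult_plus_distr_l, cos_plus, sin_plus.
    rewrite H1, H2, H3, H4. split; ring. }
  assert (Hn : forall t, Q t -> Q (- t)).
  { unfold Q; intros t [H1 H2]. rewrite HnegC, HnegS. replace (k * - t) with (- (k * t)) by ring.
    rewrite cos_neg, sin_neg. split; congruence. }
  assert (Hj : forall j : nat, Q (d / 2 ^ j)).
  { induction j.
    - unfold Q. simpl. replace (k * (d / 1)) with phi by (unfold k; field; lra). replace (d / 1) with d by field. auto.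
    - assert (Hp : 0 < 2 ^ j) by (apply pow_lt; lra).
      set (t := d / 2 ^ S j).
      assert (Ht : 0 < t <= d).
      { unfold t. simpl. split. apply Rdiv_lt_0_compat; lra.
        apply Rmult_le_reg_r with (2 * 2 ^ j). lra.
        replace (d / (2 * 2 ^ j) * (2 * 2 ^ j)) with d by (field; lra).
        assert (1 <= 2 ^ j) by (apply pow_R1_Rle; lra). nra. }
      assert (H2t : t + t = d / 2 ^ j) by (unfold t; simpl; field; lra).
      destruct IHj as [I1 I2]. rewrite <- H2t in I1, I2.
      rewrite HaddC in I1. rewrite HaddS in I2.
      rewrite Rmult_plus_distr_l, cos_plus in I1. rewrite Rmult_plus_distr_l, sin_plus in I2.
      assert (Hct : Cf t > 1/2) by (apply Hpos; rewrite Rabs_right; lra).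
      assert (Hkt : - (PI/2) < k * t < PI / 2).
      { pose proof (atan_bound x) as Hb. fold phi in Hb.
        assert (k * t = phi * (t / d)) by (unfold k; field; lra).
        assert (0 < t / d <= 1).
        { split. apply Rdiv_lt_0_compat; lra.
          apply Rmult_le_reg_r with d; auto. replace (t / d * d) with t by (field; lra). lra. }
        rewrite H. split; nra. }
      assert (Hcos : 0 < cos (k * t)) by (apply cos_gt_0; lra).
      pose proof (Hcirc t) as Ct. pose proof (sin2_cos2 (k * t)) as Kt. unfold Rsqr in Kt.
      assert (Ha : Cf t = cos (k * t)).
      { assert ((Cf t - cos (k * t)) * (Cf t + cos (k * t)) = 0) by nra.
        apply Rmult_integral in H. destruct H; lra. }
      unfold Q. fold t. split; auto.
      rewrite Ha in I2. apply Rmult_eq_reg_l with (2 * cos (k * t)); [|lra]. lra. }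
  assert (Hck : continuity_pt (fun t => cos (k * t)) 0) by (apply derivable_continuous_pt; reg).
  assert (Hsk : continuity_pt (fun t => sin (k * t)) 0) by (apply derivable_continuous_pt; reg).
  assert (Hclose : forall y eps, 0 < eps -> exists z r, Q z /\ y = z + r /\
     Rabs (Cf r - cos (k * r)) + Rabs (Sf r - sin (k * r)) < eps).
  { intros y eps He.
    destruct (cont_eps Cf 0 HcC (eps/4)) as [e1 [He1 P1]]; [lra|].
    destruct (cont_eps Sf 0 HcS (eps/4)) as [e2 [He2 P2]]; [lra|].
    destruct (cont_eps _ 0 Hck (eps/4)) as [e3 [He3 P3]]; [lra|].
    destruct (cont_eps _ 0 Hsk (eps/4)) as [e4 [He4 P4]]; [lra|].
    set (eta := Rmin (Rmin e1 e2) (Rmin e3 e4)).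
    assert (Heta : 0 < eta) by (unfold eta; repeat apply Rmin_glb_lt; auto).
    destruct (dyad_approx d Q Hdp Hs Hn Hj y eta Heta) as [z [r [Hz [Hyz Hr]]]].
    exists z, r. split; auto. split; auto.
    assert (Hra : Rabs (r - 0) < eta) by (rewrite Rminus_0_r, Rabs_right; lra).
    assert (Hm1 : eta <= e1) by (unfold eta; eapply Rle_trans; [apply Rmin_l|apply Rmin_l]).
    assert (Hm2 : eta <= e2) by (unfold eta; eapply Rle_trans; [apply Rmin_l|apply Rmin_r]).
    assert (Hm3 : eta <= e3) by (unfold eta; eapply Rle_trans; [apply Rmin_r|apply Rmin_l]).
    assert (Hm4 : eta <= e4) by (unfold eta; eapply Rle_trans; [apply Rmin_r|apply Rmin_r]).
    specialize (P1 r ltac:(lra)). specialize (P2 r ltac:(lra)).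
    specialize (P3 r ltac:(lra)). specialize (P4 r ltac:(lra)).
    simpl in P3, P4. rewrite Rmult_0_r, cos_0 in P3. rewrite Rmult_0_r, sin_0 in P4.
    rewrite H0C in P1. rewrite H0S in P2.
    assert (Rabs (Cf r - cos (k * r)) <= Rabs (Cf r - 1) + Rabs (cos (k * r) - 1)).
    { replace (Cf r - cos (k * r)) with ((Cf r - 1) + - (cos (k * r) - 1)) by ring.
      eapply Rle_trans; [apply Rabs_triang|]. rewrite Rabs_Ropp. lra. }
    assert (Rabs (Sf r - sin (k * r)) <= Rabs (Sf r - 0) + Rabs (sin (k * r) - 0)).
    { replace (Sf r - sin (k * r)) with ((Sf r - 0) + - (sin (k * r) - 0)) by ring.
      eapply Rle_trans; [apply Rabs_triang|]. rewrite Rabs_Ropp. lra. }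
    lra. }
  intros y. split; apply Rminus_diag_uniq; apply small_zero; intros eps He;
    destruct (Hclose y eps He) as [z [r [[Hz1 Hz2] [Hyz Hb]]]]; subst y;
    rewrite HaddC || rewrite HaddS; rewrite Rmult_plus_distr_l;
    rewrite cos_plus || rewrite sin_plus; rewrite Hz1, Hz2.
  - replace (cos (k * z) * Cf r - sin (k * z) * Sf r - (cos (k * z) * cos (k * r) - sin (k * z) * sin (k * r)))
      with (cos (k * z) * (Cf r - cos (k * r)) + - (sin (k * z) * (Sf r - sin (k * r)))) by ring.
    eapply Rle_lt_trans; [apply Rabs_triang|]. rewrite Rabs_Ropp.
    pose proof (abs_mul_le _ (Cf r - cos (k * r)) (abs_cos_le (k * z))).
    pose proof (abs_mul_le _ (Sf r - sin (k * r)) (abs_sin_le (k * z))). lra.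
  - replace (sin (k * z) * Cf r + cos (k * z) * Sf r - (sin (k * z) * cos (k * r) + cos (k * z) * sin (k * r)))
      with (sin (k * z) * (Cf r - cos (k * r)) + cos (k * z) * (Sf r - sin (k * r))) by ring.
    eapply Rle_lt_trans; [apply Rabs_triang|].
    pose proof (abs_mul_le _ (Cf r - cos (k * r)) (abs_sin_le (k * z))).
    pose proof (abs_mul_le _ (Sf r - sin (k * r)) (abs_cos_le (k * z))). lra.
Qed.
End Lift.


Lemma nrot0 x : nrot 0 x = x.
Proof. apply R3_eq; unfold nrot; cbn [p1 p2 p3 fst snd]; rewrite ?cos_0, ?sin_0; ring. Qed.
Lemma nmul0 x : nmul (0,0,0) x = x.
Proof. apply R3_eq; unfold nmul; cbn [p1 p2 p3 fst snd]; ring. Qed.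
Lemma nmul_t (a1 a2 a3 x1 x2 x3 : R) : nmul (a1, a2, a3) (x1, x2, x3) =
  (a1 + x1, a2 + x2, a3 + x3 + / 2 * (a1 * x2 - a2 * x1)).
Proof. reflexivity. Qed.
Lemma nrot_t th (x1 x2 x3 : R) : nrot th (x1, x2, x3) =
  (cos th * x1 - sin th * x2, sin th * x1 + cos th * x2, x3).
Proof. reflexivity. Qed.

Lemma mod_circ (S C L R0 m : R) : L - R0 = m * (S * S + C * C - 1) -> S * S + C * C = 1 -> L = R0.
Proof. intros H1 H2. rewrite H2 in H1. lra. Qed.

Lemma helic_eq c v1 v2 tau x a : p1 a = (1 - cos tau) * v1 + sin tau * v2 ->
  p2 a = (1 - cos tau) * v2 - sin tau * v1 ->
  p3 a = tau * c - / 2 * sin tau * (v1 ^ 2 + v2 ^ 2) ->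
  act a (cos tau) (sin tau) x = helicoidal c v1 v2 tau x.
Proof.
  intros E1 E2 E3. pose proof (sin2_cos2 tau) as K. unfold Rsqr in K.
  unfold helicoidal, iso_act. rewrite !nrot0, nmul0.
  destruct x as [[x1 x2] x3]. unfold ninv; cbn [p1 p2 p3 fst snd].
  rewrite nmul_t, nrot_t, nmul_t, nmul_t.
  unfold act. rewrite E1, E2, E3. cbn [p1 p2 p3 fst snd].
  set (C := cos tau) in *. set (S := sin tau) in *.
  f_equal; [f_equal; ring|].
  first [ apply (mod_circ S C _ _ (/2 * (v2 * x1 - v1 * x2))); [ring|exact K]
        | apply (mod_circ S C _ _ (- /2 * (v2 * x1 - v1 * x2))); [ring|exact K]].
Qed.

Section Main.
Variable rho : R -> R3 -> R3.
Hypothesis Hiso : iso_one_param rho.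




Lemma caseT : (forall t, Co rho t = 1 /\ Si rho t = 0) ->
  exists a, forall t x, rho t x = nmul (t * p1 a, t * p2 a, t * p3 a) x.
Proof.
  intros HT.
  destruct (cont_all rho Hiso 0) as [_ [_ [K1 [K2 K3]]]].
  assert (HA : forall s t, A rho (s + t) = act (A rho s) 1 0 (A rho t)).
  { intros s t. rewrite (law_A rho Hiso). destruct (HT s) as [E1 E2]. rewrite E1, E2. reflexivity. }
  assert (H1 : forall t, p1 (A rho t) = t * p1 (A rho 1)).
  { apply (cauchy (fun t => p1 (A rho t))).
    - intros s t. rewrite HA. unfold act; cbn [fst snd p1 p2 p3]. ring.
    - exact K1. }
  assert (H2 : forall t, p2 (A rho t) = t * p2 (A rho 1)).
  { apply (cauchy (fun t => p2 (A rho t))).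
    - intros s t. rewrite HA. unfold act; cbn [fst snd p1 p2 p3]. ring.
    - exact K2. }
  assert (H3 : forall t, p3 (A rho t) = t * p3 (A rho 1)).
  { apply (cauchy (fun t => p3 (A rho t))).
    - intros s t. rewrite HA. unfold act at 1. cbn [fst snd]. unfold p3 at 1. cbn [snd].
      rewrite (H1 s), (H1 t), (H2 s), (H2 t). ring.
    - exact K3. }
  exists (A rho 1). intros t x.
  destruct (rep rho Hiso t x) as [-> _]. destruct (HT t) as [E1 E2]. rewrite E1, E2.
  unfold act, nmul. rewrite (H1 t), (H2 t), (H3 t). cbn [p1 p2 p3 fst snd].
  f_equal; [f_equal|]; ring.
Qed.

Lemma caseN : ~ (forall t, Co rho t = 1 /\ Si rho t = 0) ->
  exists c a1 a2, forall tau x, exists s, rho s x = helicoidal c a1 a2 tau x.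
Proof.
  intros HN.
  destruct (cont_all rho Hiso 0) as [KC [KS [K1 [K2 K3]]]].
  destruct (law_0 rho Hiso) as [H0C [H0S H0A]].
  destruct (lift (Co rho) (Si rho) (circ rho Hiso)
     (fun s t => proj1 (law_CS rho Hiso s t)) (fun s t => proj2 (law_CS rho Hiso s t))
     (fun t => proj1 (law_neg rho Hiso t)) (fun t => proj2 (law_neg rho Hiso t))
     H0C H0S KC KS) as [k Hk].
  assert (Hk0 : k <> 0).
  { intros ->. apply HN. intros t. destruct (Hk t) as [-> ->]. rewrite Rmult_0_l, cos_0, sin_0. auto. }
  set (t0 := PI / k).
  assert (Ht0 : Co rho t0 = -1 /\ Si rho t0 = 0).
  { destruct (Hk t0) as [-> ->]. unfold t0. replace (k * (PI / k)) with PI by (field; auto).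
    rewrite cos_PI, sin_PI. auto. }
  set (v1 := p1 (A rho t0) / 2). set (v2 := p2 (A rho t0) / 2).
  assert (HA12 : forall s, p1 (A rho s) = (1 - Co rho s) * v1 + Si rho s * v2 /\
                           p2 (A rho s) = (1 - Co rho s) * v2 - Si rho s * v1).
  { intros s. pose proof (law_A rho Hiso s t0) as L1. pose proof (law_A rho Hiso t0 s) as L2.
    rewrite Rplus_comm in L2. rewrite L2 in L1. destruct Ht0 as [E1 E2]. rewrite E1, E2 in L1.
    pose proof (f_equal p1 L1) as M1. pose proof (f_equal p2 L1) as M2.
    unfold act in M1, M2. cbn [p1 p2 p3 fst snd] in M1, M2. unfold v1, v2.
    split; lra. }
  set (w := v1 ^ 2 + v2 ^ 2).
  set (D := fun s => p3 (A rho s) + / 2 * Si rho s * w).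
  assert (HD : forall s, D s = s * D 1).
  { apply cauchy.
    - intros s t. unfold D. rewrite (law_A rho Hiso s t). destruct (law_CS rho Hiso s t) as [_ ->].
      unfold act. cbn [p1 p2 p3 fst snd].
      destruct (HA12 s) as [-> ->]. destruct (HA12 t) as [-> ->].
      pose proof (circ rho Hiso s) as Cs.
      apply (mod_circ (Si rho s) (Co rho s) _ _ (/2 * w * Si rho t)); [unfold w; ring|lra].
    - unfold D. apply continuity_pt_plus; auto.
      apply continuity_pt_mult; auto. apply continuity_pt_mult; auto.
      apply continuity_pt_const. intros a b; auto. apply continuity_pt_const. intros a b; auto. }
  exists (D 1 / k), v1, v2. intros tau x. exists (tau / k).
  destruct (rep rho Hiso (tau / k) x) as [-> _].
  destruct (Hk (tau / k)) as [Ec Es].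
  replace (k * (tau / k)) with tau in Ec, Es by (field; auto).
  destruct (HA12 (tau / k)) as [E1 E2].
  rewrite Ec, Es in E1, E2 |- *.
  apply helic_eq; auto.
  pose proof (HD (tau / k)) as E3. unfold D at 1 in E3. rewrite Es in E3.
  replace (p3 (A rho (tau / k))) with (tau / k * D 1 - / 2 * sin tau * w) by lra.
  unfold w. field. auto.
Qed.
End Main.


Theorem mainTheorem4 (X : RiemannSurface) (f : rs_car X -> R3)
  (gamma : R -> rs_car X -> rs_car X) (rho : R -> R3 -> R3) :
  conformal_minimal_immersion X f ->
  aut_one_param X gamma ->
  iso_one_param rho ->
  (exists t p, rho t p <> p) ->
  (forall t x, f (gamma t x) = rho t (f x)) ->
  (* helicoidal surface *)
  (exists c a1 a2 : R, forall t x, exists y, f y = helicoidal c a1 a2 t (f x))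
  \/
  (* translation invariant surface *)
  (exists a1 a2 c : R, (a1, a2, c) <> (0, 0, 0) /\
     forall t x, exists y, f y = nmul (t * a1, t * a2, t * c) (f x)).
Proof.
  intros _ _ Hiso Hnt Heq.
  destruct (classic (forall t, Co rho t = 1 /\ Si rho t = 0)) as [HT|HN].
  - right. destruct (caseT rho Hiso HT) as [a Ha].
    exists (p1 a), (p2 a), (p3 a). split.
    + intros E. destruct Hnt as [t [p Hp]]. apply Hp. rewrite Ha.
      injection E. intros -> -> ->. apply R3_eq; unfold nmul; cbn [p1 p2 p3 fst snd]; ring.
    + intros t x. exists (gamma t x). rewrite Heq. apply Ha.
  - left. destruct (caseN rho Hiso HN) as [c [a1 [a2 Hc]]].
    exists c, a1, a2. intros t x. destruct (Hc t (f x)) as [s Hs].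
    exists (gamma s x). rewrite Heq. exact Hs.
Qed.
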